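(* Let $A,B\in gl(3,\mathbb{R})$ and consider the induced bilinear control system on $\mathbb{S}^2$ $$\dot s=h_A(s)+u\,h_B(s),\qquad s\in\mathbb{S}^2,\ u\in\mathbb{R},$$ where $h_C(s)=Cs-\langle Cs,s\rangle s$ for $C\in gl(3,\mathbb{R})$. If $$\operatorname{rank}\begin{pmatrix}h_A(s) & h_B(s) & h_{[A,B]}(s)\end{pmatrix}=2\quad\text{for all } s\in\mathbb{S}^2,$$ then the system satisfies the Lie algebra rank condition on $\mathbb{S}^2$. In particular, if $[A,B]=0$, the system does not satisfy the Lie algebra rank condition.
   Context: $gl(3,\mathbb{R})$ is the space of real $3\times3$ matrices, $[A,B]=AB-BA$, and $\langle\cdot,\cdot\rangle$ the Euclidean inner product. Let $\mathcal{L}_\Sigma$ be the Lie subalgebra of the Lie algebra $\chi(\mathbb{S}^2)$ of smooth vector fields on $\mathbb{S}^2$ (bracket $[X,Y]=dX(Y)-dY(X)$) generated by $\{h_A+uh_B:u\in\mathbb{R}\}$, and $\mathcal{L}_\Sigma(s)=\{X(s):X\in\mathcal{L}_\Sigma\}\subset T_s\mathbb{S}^2$. The system satisfies the Lie algebra rank condition (LARC) on $\mathbb{S}^2$ if $\dim\mathcal{L}_\Sigma(s)=2$ for every $s\in\mathbb{S}^2$. *)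

(* Defs.v *)
From HB Require Import structures.
From mathcomp Require Import all_boot all_order all_algebra.
From mathcomp Require Import all_classical all_reals all_analysis.
Set Implicit Arguments. Unset Strict Implicit. Unset Printing Implicit Defensive.
Import Order.TTheory GRing.Theory Num.Theory.
Import numFieldNormedType.Exports.
Local Open Scope ring_scope.

Section Defs.
Variable R : realType.

Definition vec3 := 'cV[R]_3.

Definition inner (x y : vec3) : R := \sum_(i < 3) x i 0 * y i 0.

Definition sphere2 (s : vec3) : Prop := inner s s = 1.

Definition mxbracket (A B : 'M[R]_3) : 'M[R]_3 := A *m B - B *m A.

(* induced vector field h_C(s) = C s - <C s, s> s (polynomial, defined on R^3) *)
Definition hfield (C : 'M[R]_3) (s : vec3) : vec3 :=
  C *m s - inner (C *m s) s *: s.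

Definition vfbracket (X Y : vec3 -> vec3) : vec3 -> vec3 :=
  fun s => 'D_(Y s) X s - 'D_(X s) Y s.

Inductive LieGen (A B : 'M[R]_3) : (vec3 -> vec3) -> Prop :=
| LG_gen (u : R) : LieGen A B (fun s => hfield A s + u *: hfield B s)
| LG_add X Y : LieGen A B X -> LieGen A B Y -> LieGen A B (fun s => X s + Y s)
| LG_scale (a : R) X : LieGen A B X -> LieGen A B (fun s => a *: X s)
| LG_bracket X Y : LieGen A B X -> LieGen A B Y -> LieGen A B (vfbracket X Y).

Definition colsmx (k : nat) (f : 'I_k -> vec3) : 'M[R]_(3, k) :=
  \matrix_(i < 3, j < k) f j i 0.

Definition dim_span_eq (S : set vec3) (n : nat) : Prop :=
  (exists f : 'I_n -> vec3, (forall j, S (f j)) /\ \rank (colsmx f) = n) /\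
  (forall f : 'I_n.+1 -> vec3, (forall j, S (f j)) -> (\rank (colsmx f) < n.+1)%N).

Definition LieEval (A B : 'M[R]_3) (s : vec3) : set vec3 :=
  fun v => exists X, LieGen A B X /\ v = X s.

Definition LARC (A B : 'M[R]_3) : Prop :=
  forall s, sphere2 s -> dim_span_eq (LieEval A B s) 2.

End Defs.

(* Main.v *)
Require Import Defs.
From HB Require Import structures.
From mathcomp Require Import all_boot all_order all_algebra.
From mathcomp Require Import all_classical all_reals all_analysis.
From mathcomp Require Import ring lra.
Import Order.TTheory GRing.Theory Num.Theory.
Import numFieldNormedType.Exports.
Set Implicit Arguments. Unset Strict Implicit. Unset Printing Implicit Defensive.
Local Open Scope ring_scope.
Local Open Scope classical_set_scope.

Lemma sum3 (V : nmodType) (F : 'I_3 -> V) : \sum_(i < 3) F i = F 0 + F 1 + F 2.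
Proof.
rewrite !big_ord_recr big_ord0 /= add0r; congr (_ + _ + _); congr F; exact: val_inj.
Qed.

Lemma vec3_eq (R : realType) (u v : vec3 R) :
  u 0 0 = v 0 0 -> u 1 0 = v 1 0 -> u 2 0 = v 2 0 -> u = v.
Proof.
move=> h0 h1 h2; apply/matrixP => i j; rewrite (ord1 j).
case: i => [[|[|[|k]]] Hi] //.
- by have -> : Ordinal Hi = 0 by apply: val_inj.
- by have -> : Ordinal Hi = 1 by apply: val_inj.
- by have -> : Ordinal Hi = 2 by apply: val_inj.
Qed.

Definition Dh (R : realType) (C : 'M[R]_3) (s v : vec3 R) : vec3 R :=
  C *m v - (inner (C *m v) s + inner (C *m s) v) *: s - inner (C *m s) s *: v.

Lemma derive_hfield (R : realType) (C : 'M[R]_3) (s v : vec3 R) :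
  'D_v (hfield C) s = Dh C s v.
Proof.
pose E1 : vec3 R := - (inner (C *m v) v *: s + (inner (C *m v) s + inner (C *m s) v) *: v).
pose E2 : vec3 R := - (inner (C *m v) v *: v).
have key : forall h : R, h != 0 ->
  h^-1 *: (hfield C (h *: v + s) - hfield C s) = Dh C s v + h *: E1 + (h * h) *: E2.
  move=> h hn0; apply: vec3_eq;
  rewrite /E1 /E2 /Dh /hfield /inner !(mxE, sum3); field; exact: hn0.
rewrite /derive; apply: cvg_lim; first exact: norm_hausdorff.
have Hid : (fun h : R => h) @ 0^' --> (0:R) by apply: cvg_within.
have H2 : (fun h : R => Dh C s v + h *: E1 + (h * h) *: E2) @ 0^' --> Dh C s v.
  have H3 := cvgD (cvgD (cvg_cst (Dh C s v)) (cvgZr_tmp (a:=E1) Hid)) (cvgZr_tmp (a:=E2) (cvgM Hid Hid)).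
  rewrite mul0r !scale0r !addr0 in H3.
  apply: H3; by [] || exact: _.
apply: cvg_trans H2.
apply: near_eq_cvg; near=> h; rewrite /= key //; near: h; exact: nbhs_dnbhs_neq.
Unshelve. all: end_near.
Qed.

Ltac vexp := rewrite /hfield /Dh /inner /mxbracket ?(mxE, sum3).

Lemma hfieldD (R : realType) (C1 C2 : 'M[R]_3) s :
  hfield (C1 + C2) s = hfield C1 s + hfield C2 s.
Proof. apply: vec3_eq; vexp; ring. Qed.

Lemma hfieldZ (R : realType) (a : R) (C : 'M[R]_3) s :
  hfield (a *: C) s = a *: hfield C s.
Proof. apply: vec3_eq; vexp; ring. Qed.

Lemma hfield_tangent (R : realType) (C : 'M[R]_3) (s : vec3 R) :
  sphere2 s -> inner (hfield C s) s = 0.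
Proof.
rewrite /sphere2 => hs.
have -> : inner (hfield C s) s = inner (C *m s) s * (1 - inner s s).
  by vexp; ring.
by rewrite hs subrr mulr0.
Qed.

Lemma vfbracket_h (R : realType) (C1 C2 : 'M[R]_3) :
  vfbracket (hfield C1) (hfield C2) = hfield (mxbracket C1 C2).
Proof.
apply: funext => s; rewrite /vfbracket !derive_hfield /Dh /hfield /mxbracket.
rewrite !mulmxBr -!scalemxAr !mulmxBl -!mulmxA.
move: (C1 *m (C2 *m s)) (C2 *m (C1 *m s)) (C1 *m s) (C2 *m s) => c d a b.
apply: vec3_eq; rewrite /inner !(mxE, sum3).
all: ring.
Qed.

Lemma LieGen_h (R : realType) (A B : 'M[R]_3) X : LieGen A B X ->
  exists C, X = hfield C /\
    (mxbracket A B = 0 -> exists a b : R, C = a *: A + b *: B).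
Proof.
elim => [u|X1 Y1 _ [C1 [-> H1]] _ [C2 [-> H2]]|a X1 _ [C [-> H]]
        |X1 Y1 _ [C1 [-> H1]] _ [C2 [-> H2]]].
- exists (A + u *: B); split.
    by apply: funext => s; rewrite hfieldD hfieldZ.
  by move=> _; exists 1, u; rewrite scale1r.
- exists (C1 + C2); split.
    by apply: funext => s; rewrite hfieldD.
  move=> hc; have [a1 [b1 ->]] := H1 hc; have [a2 [b2 ->]] := H2 hc.
  exists (a1 + a2), (b1 + b2); rewrite !scalerDl.
  by rewrite addrACA.
- exists (a *: C); split.
    by apply: funext => s; rewrite hfieldZ.
  move=> hc; have [a1 [b1 ->]] := H hc.
  exists (a * a1), (a * b1); rewrite scalerDr !scalerA //.
- exists (mxbracket C1 C2); split; first by rewrite vfbracket_h.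
  move=> hc; have [a1 [b1 ->]] := H1 hc; have [a2 [b2 ->]] := H2 hc.
  exists 0, 0; rewrite !scale0r addr0.
  have hAB : A *m B = B *m A by apply/eqP; rewrite -subr_eq0; apply/eqP; exact: hc.
  rewrite /mxbracket !mulmxDl !mulmxDr -!scalemxAl -!scalemxAr !scalerA hAB.
  move: (B *m A) (A *m A) (B *m B) => P Q S.
  rewrite (mulrC b1 a2) (mulrC a1 b2) (mulrC b1 b2) (mulrC a1 a2).
  by rewrite addrACA subrr.
Qed.

Lemma rank_tangent (R : realType) (s : vec3 R) (f : 'I_3 -> vec3 R) :
  sphere2 s -> (forall j, inner (f j) s = 0) -> (\rank (colsmx f) < 3)%N.
Proof.
move=> hs hf; rewrite ltn_neqAle rank_leq_row andbT; apply/negP => /eqP hr.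
have hfree : row_free (colsmx f) by rewrite /row_free hr.
have : s^T *m colsmx f = 0 *m colsmx f.
  rewrite mul0mx; apply/matrixP => i j; rewrite (ord1 i) !mxE.
  transitivity (inner (f j) s); last exact: hf j.
  rewrite /inner; by apply: eq_bigr => k _; rewrite !mxE mulrC.
move/(row_free_inj hfree)/(congr1 trmx); rewrite trmxK trmx0 => hs0.
move: hs; rewrite /sphere2 hs0 /inner big1 => [/esym/eqP|k _]; last by rewrite mxE mul0r.
by rewrite oner_eq0.
Qed.

Section Gens.
Lemma genA (R : realType) (A B : 'M[R]_3) : LieGen A B (hfield A).
Proof.
have e : (fun s => hfield A s + 0 *: hfield B s) = hfield A.
  by apply: funext => x; rewrite scale0r addr0.
rewrite -e; exact: LG_gen.
Qed.

Lemma genB (R : realType) (A B : 'M[R]_3) : LieGen A B (hfield B).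
Proof.
have e : (fun s => (fun s => hfield A s + 1 *: hfield B s) s +
   (-1) *: (fun s => hfield A s + 0 *: hfield B s) s) = hfield B.
  by apply: funext => x; rewrite /= scale1r scale0r addr0 scaleN1r addrAC subrr add0r.
rewrite -e; apply: LG_add; first exact: LG_gen.
apply: LG_scale; exact: LG_gen.
Qed.

Lemma genAB (R : realType) (A B : 'M[R]_3) : LieGen A B (hfield (mxbracket A B)).
Proof.
have e0 : (fun s => hfield A s + 0 *: hfield B s) = hfield (A + 0 *: B).
  by apply: funext => x; rewrite hfieldD hfieldZ.
have e1 : (fun s => hfield A s + 1 *: hfield B s) = hfield (A + 1 *: B).
  by apply: funext => x; rewrite hfieldD hfieldZ.
have e : mxbracket A B = mxbracket (A + 0 *: B) (A + 1 *: B).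
  rewrite scale0r addr0 scale1r /mxbracket mulmxDr mulmxDl.
  by rewrite opprD addrACA subrr add0r.
rewrite e -vfbracket_h -e0 -e1; apply: LG_bracket; exact: LG_gen.
Qed.
End Gens.

Lemma LieEval_comb (R : realType) (A B : 'M[R]_3) (s : vec3 R) (w : 'cV[R]_(1 + (1 + 1))) :
  LieEval A B s (row_mx (hfield A s) (row_mx (hfield B s) (hfield (mxbracket A B) s)) *m w).
Proof.
rewrite -[w]vsubmxK mul_row_col -[dsubmx w]vsubmxK mul_row_col.
rewrite [usubmx w]mx11_scalar [usubmx (dsubmx w)]mx11_scalar [dsubmx (dsubmx w)]mx11_scalar.
rewrite !mul_mx_scalar.
set a := usubmx w 0 0; set b := usubmx (dsubmx w) 0 0; set c := dsubmx (dsubmx w) 0 0.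
exists (fun x => a *: hfield A x + (b *: hfield B x + c *: hfield (mxbracket A B) x)).
split => //.
apply: LG_add; first by apply: LG_scale; exact: genA.
apply: LG_add; apply: LG_scale; [exact: genB | exact: genAB].
Qed.

Lemma part1a (R : realType) (A B : 'M[R]_3) (s : vec3 R) :
  \rank (row_mx (hfield A s) (row_mx (hfield B s) (hfield (mxbracket A B) s))) = 2%N ->
  exists f : 'I_2 -> vec3 R, (forall j, LieEval A B s (f j)) /\ \rank (colsmx f) = 2%N.
Proof.
set M := row_mx _ _ => hM.
have gen : forall r (N : 'M[R]_(r, 3)), r = 2%N -> \rank N = r ->
    (forall i, (row i N <= M^T)%MS) ->
    exists f : 'I_2 -> vec3 R, (forall j, LieEval A B s (f j)) /\ \rank (colsmx f) = 2%N.
  move=> r N er; subst r => hr hsub; exists (fun j => (row j N)^T); split.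
    move=> j; have [D hD] := submxP (hsub j).
    rewrite hD trmx_mul trmxK; exact: LieEval_comb.
  have -> : colsmx (fun j => (row j N)^T) = N^T by apply/matrixP => i j; rewrite !mxE.
  by rewrite mxrank_tr.
apply: (gen _ (row_base M^T)).
- by rewrite mxrank_tr.
- by rewrite eq_row_base.
- move=> i; apply: submx_trans (row_sub i _) _; by rewrite eq_row_base.
Qed.

Lemma o10 : ((1 : 'I_3) == 0) = false. Proof. by []. Qed.
Lemma o20 : ((2 : 'I_3) == 0) = false. Proof. by []. Qed.
Lemma o21 : ((2 : 'I_3) == 1) = false. Proof. by []. Qed.
Lemma p10 : ((1 : 'I_2) == 0) = false. Proof. by []. Qed.

Lemma sum2 (V : nmodType) (F : 'I_2 -> V) : \sum_(i < 2) F i = F 0 + F 1.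
Proof.
rewrite !big_ord_recr big_ord0 /= add0r; congr (_ + _); congr F; exact: val_inj.
Qed.

Definition Qgen (T : comNzRingType) (A B : 'M[T]_3) (t : 'cV[T]_3) : 'M[T]_3 :=
  \matrix_(i < 3, j < 3)
    (if i == 0 then t j 0 else if i == 1 then (A *m t) j 0 else (B *m t) j 0).

Lemma map_Qgen (aR rR : comNzRingType) (f : {rmorphism aR -> rR}) A B t :
  map_mx f (Qgen A B t) = Qgen (map_mx f A) (map_mx f B) (map_mx f t).
Proof.
rewrite /Qgen -!map_mxM; apply/matrixP => i j; rewrite !mxE.
by case: ifP => _ //; case: ifP.
Qed.

Definition tx (R : realType) (x : R) : vec3 R :=
  \col_(i < 3) (if i == 0 then 1 - 2 * x else if i == 1 then 4 * x * (1 - x) else 0).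

Lemma cubic_root (R : realType) (A B : 'M[R]_3) :
  exists x : R, \det (Qgen A B (tx x)) = 0.
Proof.
pose tp : 'cV[{poly R}]_3 := \col_(i < 3)
  (if i == 0 then 1 - 2%:P * 'X else if i == 1 then 4%:P * 'X * (1 - 'X) else 0).
pose q := \det (Qgen (map_mx polyC A) (map_mx polyC B) tp).
have hq : forall x, q.[x] = \det (Qgen A B (tx x)).
  move=> x; rewrite -horner_evalE -det_map_mx map_Qgen.
  congr (\det (Qgen _ _ _)); apply/matrixP => i j; rewrite !mxE;
    [| |case: ifP => _; [|case: ifP => _]];
    (match goal with |- _ ?p = _ => transitivity (p.[x]); first by [] end);
    by rewrite !hornerE.
have hneg : Qgen A B (tx 1) = (-1) *: Qgen A B (tx 0).
  have -> : tx 1 = - tx (0 : R).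
    apply/matrixP => i j; rewrite !mxE.
    by case: ifP => _; [ring|case: ifP => _; ring].
  rewrite /Qgen !mulmxN; apply/matrixP => i j; rewrite !mxE.
  case: ifP => _; first by rewrite mulN1r.
  case: ifP => _; by rewrite mulN1r.
have h1 : q.[1] = - q.[0] by rewrite !hq hneg detZ; ring.
have [x0 hx0] : exists x, q.[x] = 0.
  case: (lerP q.[0] 0) => h0.
    have hi : q.[0] <= 0 <= q.[1] by rewrite h0 /= h1 oppr_ge0.
    have [x _ rx] := poly_ivt ler01 hi.
    by exists x; apply/eqP.
  have hi : (- q).[0] <= 0 <= (- q).[1].
    by rewrite !hornerN h1 opprK oppr_le0 (ltW h0).
  have [x _ rx] := poly_ivt ler01 hi.
  by exists x; move: rx; rewrite /root hornerN oppr_eq0 => /eqP.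
by exists x0; rewrite -hq.
Qed.

Lemma tx_pos (R : realType) (x : R) : 0 < inner (tx x) (tx x).
Proof.
rewrite /inner sum3 !mxE eqxx o10 o20 o21 /=.
have -> : 4 * x * (1 - x) = 1 - (1 - 2 * x) * (1 - 2 * x) by ring.
set y := (1 - 2 * x) * (1 - 2 * x).
have hy : 0 <= y by rewrite /y -expr2 sqr_ge0.
rewrite mulr0 addr0 -/y.
nra.
Qed.

Lemma kernel_comb (R : realType) (A B : 'M[R]_3) (t : vec3 R) :
  \det (Qgen A B t) = 0 ->
  exists v0 v1 v2 : R, [|| v0 != 0, v1 != 0 | v2 != 0] /\
    v0 *: t + v1 *: (A *m t) + v2 *: (B *m t) = 0.
Proof.
move/eqP/det0P => [v vn0 hv].
exists (v 0 0), (v 0 1), (v 0 2); split.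
  apply: contraT; rewrite !negb_or !negbK => /and3P[/eqP h0 /eqP h1 /eqP h2].
  have : v^T = 0 by apply: vec3_eq; rewrite !mxE.
  move/(congr1 trmx); rewrite trmxK trmx0 => v0; by rewrite v0 eqxx in vn0.
move: hv; rewrite /Qgen; move: (A *m t) (B *m t) => a b hv.
apply: vec3_eq.
- by move: (congr1 (fun M : 'M[R]_(1,3) => M 0 0) hv); rewrite !mxE sum3 !mxE eqxx o10 o20 o21.
- by move: (congr1 (fun M : 'M[R]_(1,3) => M 0 1) hv); rewrite !mxE sum3 !mxE eqxx o10 o20 o21.
- by move: (congr1 (fun M : 'M[R]_(1,3) => M 0 2) hv); rewrite !mxE sum3 !mxE eqxx o10 o20 o21.
Qed.

Lemma innerDZ (R : realType) (a b : R) (x y s : vec3 R) :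
  inner (a *: x + b *: y) s = a * inner x s + b * inner y s.
Proof. rewrite /inner !sum3 !mxE; ring. Qed.

Lemma innerZZ (R : realType) (c : R) (x : vec3 R) :
  inner (c *: x) (c *: x) = c * c * inner x x.
Proof. rewrite /inner !sum3 !mxE; ring. Qed.

Lemma innerZl (R : realType) (a : R) (x s : vec3 R) :
  inner (a *: x) s = a * inner x s.
Proof. rewrite /inner !sum3 !mxE; ring. Qed.

Lemma comb_h (R : realType) (A B : 'M[R]_3) (s : vec3 R) (v0 v1 v2 : R) :
  v1 *: hfield A s + v2 *: hfield B s =
  (v0 *: s + v1 *: (A *m s) + v2 *: (B *m s)) -
  (v0 + v1 * inner (A *m s) s + v2 * inner (B *m s) s) *: s.
Proof.
rewrite /hfield; move: (A *m s) (B *m s) => a b.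
apply: vec3_eq; rewrite !mxE; ring.
Qed.

Lemma exists_s (R : realType) (A B : 'M[R]_3) :
  exists s : vec3 R, sphere2 s /\ exists v1 v2 : R,
    ((v1 != 0) || (v2 != 0)) /\ v1 *: hfield A s + v2 *: hfield B s = 0.
Proof.
have [x hx] := cubic_root A B.
have [v0 [v1 [v2 [hv ht]]]] := kernel_comb hx.
set t := tx x in ht.
have tpos : 0 < inner t t by exact: tx_pos.
set r := Num.sqrt (inner t t).
have r0 : r != 0 by rewrite gt_eqF // sqrtr_gt0.
set s := r^-1 *: t.
have hs : sphere2 s.
  rewrite /sphere2 /s innerZZ -(sqr_sqrtr (ltW tpos)) -/r; field; exact: r0.
have hs0 : v0 *: s + v1 *: (A *m s) + v2 *: (B *m s) = 0.
  have -> : v0 *: s + v1 *: (A *m s) + v2 *: (B *m s) =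
            r^-1 *: (v0 *: t + v1 *: (A *m t) + v2 *: (B *m t)).
    by rewrite /s -!scalemxAr !scalerDr !scalerA !(mulrC r^-1).
  by rewrite ht scaler0.
set mu := v0 + v1 * inner (A *m s) s + v2 * inner (B *m s) s.
have hc : v1 *: hfield A s + v2 *: hfield B s = - (mu *: s).
  by rewrite (comb_h _ _ _ v0) hs0 sub0r.
have mu0 : mu = 0.
  have := congr1 (fun y => inner y s) hc.
  rewrite /= innerDZ !hfield_tangent // !mulr0 addr0.
  rewrite -scaleNr innerZl hs mulr1 => /esym/eqP; rewrite oppr_eq0 => /eqP //.
exists s; split => //; exists v1, v2; split; last by rewrite hc mu0 scale0r oppr0.
move: hv => /orP[v0n|//].
apply: contraT; rewrite negb_or !negbK => /andP[/eqP e1 /eqP e2].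
move: hs0; rewrite e1 e2 !scale0r !addr0 => /eqP; rewrite scaler_eq0 (negbTE v0n) /=.
move=> /eqP sz; move: hs; rewrite /sphere2 sz /inner big1 => [/esym/eqP|k _].
  by rewrite oner_eq0.
by rewrite mxE mul0r.
Qed.

Lemma part2_rank (R : realType) (hA hB : vec3 R) (v1 v2 : R) :
  (v1 != 0) || (v2 != 0) -> v1 *: hA + v2 *: hB = 0 ->
  forall f : 'I_2 -> vec3 R,
  (forall j, exists a b : R, f j = a *: hA + b *: hB) -> (\rank (colsmx f) < 2)%N.
Proof.
move=> hv hcomb f hf.
have [a ha] := choice hf; have [b hb] := choice ha.
pose H : 'M[R]_(3, 2) := \matrix_(i < 3, k < 2) (if k == 0 then hA i 0 else hB i 0).
pose K : 'M[R]_2 := \matrix_(k < 2, j < 2) (if k == 0 then a j else b j).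
have eHK : colsmx f = H *m K.
  apply/matrixP => i j; rewrite !mxE sum2 !mxE eqxx p10 (hb j) !mxE.
  by rewrite mulrC (mulrC (b j)).
rewrite eHK; apply: leq_ltn_trans (mxrankM_maxl H K) _.
rewrite ltn_neqAle rank_leq_col andbT; apply/negP => /eqP hr.
have hfree : row_free H^T by rewrite /row_free mxrank_tr hr.
pose w : 'rV[R]_2 := \row_(k < 2) (if k == 0 then v1 else v2).
have : w *m H^T = 0 *m H^T.
  rewrite mul0mx; apply/matrixP => i j; rewrite (ord1 i) !mxE sum2 !mxE eqxx p10.
  transitivity ((v1 *: hA + v2 *: hB) j 0); first by rewrite !mxE.
  by rewrite hcomb mxE.
move/(row_free_inj hfree) => hw0.
have e1 : w 0 0 = 0 by rewrite hw0 mxE.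
have e2 : w 0 1 = 0 by rewrite hw0 mxE.
move: e1 e2 hv; rewrite !mxE eqxx p10 /= => -> ->.
by rewrite eqxx.
Qed.

Theorem theorem2p7 (R : realType) (A B : 'M[R]_3) :
  ((forall s : vec3 R, sphere2 s ->
      \rank (row_mx (hfield A s) (row_mx (hfield B s) (hfield (mxbracket A B) s))) = 2%N) ->
   LARC A B) /\
  (mxbracket A B = 0 -> ~ LARC A B).
Proof.
split.
- move=> hrank s hs; rewrite /dim_span_eq; split; first exact: part1a (hrank s hs).
  move=> f hf; apply: (rank_tangent hs) => j.
  have [X [hX ->]] := hf j.
  have [C [-> _]] := LieGen_h hX.
  exact: hfield_tangent.
- move=> hc hL.
  have [s [hs [v1 [v2 [hv hcomb]]]]] := exists_s A B.
  have [[f [hf hr]] _] := hL s hs.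
  have : (\rank (colsmx f) < 2)%N.
    apply: (part2_rank hv hcomb) => j.
    have [X [hX ->]] := hf j.
    have [C [-> hC]] := LieGen_h hX.
    have [a [b ->]] := hC hc.
    by exists a, b; rewrite hfieldD !hfieldZ.
  by rewrite hr ltnn.
Qed.
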